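(* The post-processed cell averages of the conserved variables satisfy $$\sum_j\overline{\bm U}_j(t+\Delta t)=\sum_j\overline{\bm U}_j^{\,*}.$$
   Context: Consider a 1-D hyperbolic system of conservation laws $\bm U_t+\bm F(\bm U)_x=\bm 0$, together with an equivalent nonconservative (primitive) formulation in variables $\bm V$. There is an invertible transformation $\bm U(\bm V)$ from primitive to conserved variables, with inverse $\bm V(\bm U)$. The numerical solution lives on two overlapping uniform meshes with spacing $\Delta x$. The first mesh has cells $I_j=[x_{j-\frac12},x_{j+\frac12}]$ and carries cell averages $\overline{\bm U}_j$ of the conserved variables. The second, staggered mesh has cells $I_{j+\frac12}=[x_j,x_{j+1}]$ and carries cell averages $\overline{\bm V}_{j+\frac12}$ of the primitive variables. After one time step from $t$ to $t+\Delta t$ by an ODE solver, denote the evolved values by $\overline{\bm U}_j^{\,*}$ and $\overline{\bm V}_{j+\frac12}^{\,*}$. The post-processing is then defined as follows. (1) Set $\bm U_{j+\frac12}^*:=\bm U(\overline{\bm V}_{j+\frac12}^{\,*})$. (2) Compute the slopes $$(\bm U_x)_j^*=2\,\mathrm{minmod}\Big(\frac{\overline{\bm U}_j^{\,*}-\bm U_{j-\frac12}^*}{\Delta x},\frac{\bm U_{j+\frac12}^*-\overline{\bm U}_j^{\,*}}{\Delta x}\Big),$$ where minmod is applied componentwise. It returns the minimum of its arguments if all are positive, the maximum if all are negative, and $0$ otherwise. Then define $$\bm U_{j+\frac12}^{*,-}:=\overline{\bm U}_j^{\,*}+\frac{\Delta x}{2}(\bm U_x)_j^*,\qquad \bm U_{j+\frac12}^{*,+}:=\overline{\bm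 U}_{j+1}^{\,*}-\frac{\Delta x}{2}(\bm U_x)_{j+1}^*.$$ (3) Set $\bm U_{j+\frac12}^{**}:=\frac12\big(\bm U_{j+\frac12}^{*,-}+\bm U_{j+\frac12}^{*,+}\big)$ and $\overline{\bm V}_{j+\frac12}(t+\Delta t)=\bm V(\bm U_{j+\frac12}^{**})$. (4) Set $\overline{\bm U}_j(t+\Delta t)=\frac12\big(\bm U_{j-\frac12}^{**}+\bm U_{j+\frac12}^{**}\big)$. Sums are over all cells, and it is assumed that there are no contributions from boundary terms (e.g. periodic or compactly supported data). *)

(* Defs.v *)
From HB Require Import structures.
From mathcomp Require Import all_boot all_order all_algebra.
Set Implicit Arguments. Unset Strict Implicit. Unset Printing Implicit Defensive.
Import Order.TTheory GRing.Theory Num.Theory.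
Local Open Scope ring_scope.

Definition minmod2 {R : realFieldType} (a b : R) : R :=
  if (0 < a) && (0 < b) then Num.min a b
  else if (a < 0) && (b < 0) then Num.max a b
  else 0.

Definition minmodv {R : realFieldType} {m : nat} (a b : 'rV[R]_m) : 'rV[R]_m :=
  \row_k minmod2 (a 0 k) (b 0 k).

(* Indexing conventions (cells indexed by integers):
   Ustar j  = \overline{U}_j^*          (cell I_j)
   Vstar j  = \overline{V}_{j+1/2}^*    (staggered cell I_{j+1/2})
   Uof : primitive -> conserved,  Vof : conserved -> primitive. *)
Section PostProcessing.
Variables (R : realFieldType) (m : nat).
Variables (Uof Vof : 'rV[R]_m -> 'rV[R]_m) (dx : R).
Variables (Ustar Vstar : int -> 'rV[R]_m).

Definition Uhalf (j : int) : 'rV[R]_m := Uof (Vstar j).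

Definition slope (j : int) : 'rV[R]_m :=
  2%:R *: minmodv (dx^-1 *: (Ustar j - Uhalf (j - 1)))
                  (dx^-1 *: (Uhalf j - Ustar j)).

Definition Uminus (j : int) : 'rV[R]_m := Ustar j + (dx / 2%:R) *: slope j.
Definition Uplus (j : int) : 'rV[R]_m :=
  Ustar (j + 1) - (dx / 2%:R) *: slope (j + 1).

Definition Ustarstar (j : int) : 'rV[R]_m := 2%:R^-1 *: (Uminus j + Uplus j).
Definition Vnew (j : int) : 'rV[R]_m := Vof (Ustarstar j).

Definition Unew (j : int) : 'rV[R]_m :=
  2%:R^-1 *: (Ustarstar (j - 1) + Ustarstar j).
End PostProcessing.

(* Main.v *)
Require Import Defs.
From HB Require Import structures.
From mathcomp Require Import all_boot all_order all_algebra.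
Import Order.TTheory GRing.Theory Num.Theory.
Local Open Scope ring_scope.

Lemma shift1 (R : realFieldType) (m n : nat) (f : int -> 'rV[R]_m) :
  (0 < n)%N -> (forall j : int, f (j + n%:Z) = f j) ->
  \sum_(0 <= j < n) f (j%:Z + 1) = \sum_(0 <= j < n) f j%:Z.
Proof.
case: n => [//|n] _ per.
rewrite big_nat_recr //= big_nat_recl //=.
have e : forall k : nat, (k%:Z + 1 = k.+1%:Z)%R.
  by move=> k; rewrite -[in RHS]addn1 PoszD.
have -> : f (n%:Z + 1) = f 0.
  by rewrite -(per 0) add0r e.
rewrite addrC; congr (_ + _); apply: eq_bigr => i _.
by rewrite e.
Qed.

Lemma shiftm1 (R : realFieldType) (m n : nat) (f : int -> 'rV[R]_m) :
  (0 < n)%N -> (forall j : int, f (j + n%:Z) = f j) ->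
  \sum_(0 <= j < n) f (j%:Z - 1) = \sum_(0 <= j < n) f j%:Z.
Proof.
move=> hn per.
rewrite -(@shift1 _ _ n (fun j => f (j - 1))) //.
  by apply: eq_bigr => i _; rewrite addrK.
by move=> j; rewrite addrAC per.
Qed.

Theorem mainTheorem1 (R : realFieldType) (m n : nat)
  (Uof Vof : 'rV[R]_m -> 'rV[R]_m) (dx : R)
  (Ustar Vstar : int -> 'rV[R]_m)
  (hn : (0 < n)%N) (hdx : 0 < dx)
  (hUV : cancel Vof Uof) (hVU : cancel Uof Vof)
  (perU : forall j : int, Ustar (j + n%:Z) = Ustar j)
  (perV : forall j : int, Vstar (j + n%:Z) = Vstar j) :
  \sum_(0 <= j < n) Unew Uof dx Ustar Vstar j%:Z
  = \sum_(0 <= j < n) Ustar j%:Z.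
Proof.
have perH : forall j, Uhalf Uof Vstar (j + n%:Z) = Uhalf Uof Vstar j.
  by move=> j; rewrite /Uhalf perV.
have perS : forall j, slope Uof dx Ustar Vstar (j + n%:Z) = slope Uof dx Ustar Vstar j.
  by move=> j; rewrite /slope perU perH addrAC perH.
have perSS : forall j, Ustarstar Uof dx Ustar Vstar (j + n%:Z) = Ustarstar Uof dx Ustar Vstar j.
  move=> j; rewrite /Ustarstar /Uminus /Uplus perU perS.
  have -> : j + n%:Z + 1 = (j + 1) + n%:Z by rewrite addrAC.
  by rewrite perU perS.
rewrite /Unew -scaler_sumr big_split /= shiftm1 //.
rewrite /Ustarstar -!scaler_sumr big_split /= /Uminus /Uplus.
rewrite !big_split /= sumrN.
rewrite -!(scaler_sumr (dx / 2%:R)).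
rewrite (@shift1 _ _ n Ustar) // (@shift1 _ _ n (slope Uof dx Ustar Vstar)) //.
set A := \sum_(_ <= _ < _) Ustar _.
set B := \sum_(_ <= _ < _) slope _ _ _ _ _.
have -> : A + (dx / 2%:R) *: B + (A - (dx / 2%:R) *: B) = 2%:R *: A.
  by rewrite addrACA subrr addr0 scaler_nat mulr2n.
rewrite scalerA mulVf ?pnatr_eq0 // scale1r -mulr2n -scaler_nat scalerA.
by rewrite mulVf ?pnatr_eq0 // scale1r.
Qed.
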